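(* Let $\mathcal P=[p_1,\ldots,p_k]\in AP_{n,k}$. If $\mathrm{slack}(\mathcal P)<0$, then there is an index $j<k$ such that $p_j<p_{j+1}$ and $\mathrm{slack}(\mathcal P)=\mathrm{slack}_j(\mathcal P)$.
   Context: $s^{n,k}=\frac{n(n+1)}{2k}$. An ascending partition of $n$ of size $k$ is a sequence of positive integers $[p_1,\ldots,p_k]$ with $p_1\le\cdots\le p_k$ and $\sum_i p_i=n$; $AP_{n,k}$ is the set of all such partitions when $s^{n,k}$ is an integer (and empty otherwise). For $j=1,\ldots,k$, $\mathrm{slack}_j(\mathcal P)=\sum_{i=1}^{p_1+\cdots+p_j}(n-i+1)-j\,s^{n,k}$, and $\mathrm{slack}(\mathcal P)=\min_{1\le j\le k-1}\mathrm{slack}_j(\mathcal P)$. *)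

(* Defs.v *)
From mathcomp Require Import all_boot all_order all_algebra.
Set Implicit Arguments. Unset Strict Implicit. Unset Printing Implicit Defensive.
Import Order.TTheory GRing.Theory Num.Theory.

(* A partition is a seq nat [p_1; ...; p_k]; p_j = nth 0 P (j-1). *)

(* s^{n,k} = n(n+1)/(2k); only used when 2k divides n(n+1). *)
Definition snk (n k : nat) : nat := (n * n.+1) %/ (2 * k).

Definition isAP (n k : nat) (P : seq nat) : bool :=
  [&& 0 < k, size P == k, sorted leq P, all (fun x => 0 < x) P,
      sumn P == n & (2 * k %| n * n.+1)].

Definition slack_j (n k : nat) (P : seq nat) (j : nat) : int :=
  ((\sum_(1 <= i < (sumn (take j P)).+1) (n.+1 - i)%N)%:Z - (j * snk n k)%:Z)%R.

(* slack(P) = min_{1 <= j <= k-1} slack_j(P).  For k <= 1 the minimum is over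
   an empty range; we use the convention value 0 (never negative). *)
Definition slack (n k : nat) (P : seq nat) : int :=
  match [seq slack_j n k P j | j <- iota 1 k.-1] with
  | [::] => 0%R
  | x :: s => foldl Num.min x s
  end.

(* Main.v *)
Require Import Defs.
From mathcomp Require Import all_boot all_order all_algebra zify.
Import Order.TTheory GRing.Theory Num.Theory.

Lemma F2 n m : m <= n.+1 -> 2 * (\sum_(1 <= i < m.+1) (n.+1 - i)) + m * m.+1 = 2 * m * n.+1.
Proof.
elim: m => [|m IH] Hm; first by rewrite big_geq.
rewrite big_nat_recr //=. have := IH (ltnW Hm). nia.
Qed.

Lemma S_succ (P : seq nat) i : i < size P -> sumn (take i.+1 P) = sumn (take i P) + nth 0 P i.
Proof. by move=> h; rewrite (take_nth 0 h) -cats1 sumn_cat /= addn0. Qed.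

Lemma sumn_take_le (P : seq nat) i : sumn (take i P) <= sumn P.
Proof. by rewrite -{2}(cat_take_drop i P) sumn_cat leq_addr. Qed.

Lemma key n b p q x1 x2 x3 : b + p + q <= n -> q <= p ->
 2 * x1 + b * b.+1 = 2 * b * n.+1 ->
 2 * x2 + (b+p) * (b+p).+1 = 2 * (b+p) * n.+1 ->
 2 * x3 + (b+p+q) * (b+p+q).+1 = 2 * (b+p+q) * n.+1 -> x3 + x1 <= 2 * x2.
Proof.
move=> H1 H2.
have [r ->] : exists r, n = b + p + q + r by exists (n - (b+p+q)); lia.
have [t ->] : exists t, p = q + t by exists (p - q); lia.
move=> E1 E2 E3.
have : 2 * x3 + 2 * x1 + (2*q*q + 4*q*t + t*t + 2*t*r + t) = 4 * x2 by nia.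
lia.
Qed.

Lemma conc n k P i : size P = k -> sumn P = n -> i.+2 <= k -> nth 0 P i.+1 <= nth 0 P i ->
  (slack_j n k P i.+2 - slack_j n k P i.+1 <= slack_j n k P i.+1 - slack_j n k P i)%R.
Proof.
move=> Hs Hn Hk Hpq.
have H2 : sumn (take i.+2 P) <= n by rewrite -Hn sumn_take_le.
rewrite /slack_j !S_succ ?Hs // in H2 *; try lia.
move: H2 Hpq.
set b := sumn (take i P); set p := nth 0 P i; set q := nth 0 P i.+1.
move=> H2 Hpq.
have E1 := F2 n b ltac:(lia).
have E2 := F2 n (b + p) ltac:(lia).
have E3 := F2 n (b + p + q) ltac:(lia).
move: E1 E2 E3.
set x1 := \sum_(_ <= _ < _) _; set x2 := \sum_(_ <= _ < _) _; set x3 := \sum_(_ <= _ < _) _.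
move=> E1 E2 E3.
have := @key n _ _ _ _ _ _ H2 Hpq E1 E2 E3.
lia.
Qed.

Lemma foldl_min_mem (x : int) s : foldl Num.min x s \in x :: s.
Proof.
elim: s x => [|y s IH] x /=; first by rewrite inE.
have := IH (Num.min x y); rewrite !inE => /orP[/eqP->|->]; last by rewrite !orbT.
by rewrite minEle; case: ifP => _; rewrite eqxx ?orbT.
Qed.

Lemma foldl_min_le (x : int) s y : y \in x :: s -> (foldl Num.min x s <= y)%R.
Proof.
elim: s x y => [|z s IH] x y /=; first by rewrite inE => /eqP->.
rewrite !inE => /orP[/eqP->|/orP[/eqP->|Hy]].
- have := IH (Num.min x z) _ (mem_head _ _); move/le_trans; apply.
  by rewrite ge_min lexx.
- have := IH (Num.min x z) _ (mem_head _ _); move/le_trans; apply.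
  by rewrite ge_min lexx orbT.
- by apply: IH; rewrite inE Hy orbT.
Qed.

Lemma slack_min (L : seq int) v :
  v = match L with [::] => 0%R | x :: s => foldl Num.min x s end -> (v < 0)%R ->
  v \in L /\ forall y, y \in L -> (v <= y)%R.
Proof.
case: L => [|x s] -> //; split; [exact: foldl_min_mem | exact: foldl_min_le].
Qed.

Theorem mainTheorem6 (n k : nat) (P : seq nat) :
  isAP n k P -> (slack n k P < 0)%R ->
  exists j : nat, [/\ 1 <= j < k, nth 0 P j.-1 < nth 0 P j
                    & slack n k P = slack_j n k P j].
Proof.
move=> /andP[k0 /andP[/eqP Hs /andP[_ /andP[_ /andP[/eqP Hn Hd]]]]] Hneg.
have G0 : slack_j n k P 0 = 0%R.
  by rewrite /slack_j take0 /= big_geq // mul0n subr0.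
have Gk : slack_j n k P k = 0%R.
  rewrite /slack_j take_oversize ?Hs // Hn.
  have := F2 n n (leqnSn n). rewrite /snk. have := divnK Hd.
  set s := _ %/ _; set F := \sum_(_ <= _ < _) _ => E1 E2.
  apply/eqP; rewrite subr_eq0; apply/eqP; congr Posz. nia.
have [Hmem Hlb] := @slack_min [seq slack_j n k P j | j <- iota 1 k.-1] _ erefl Hneg.
set m := slack n k P in Hneg Hmem Hlb *.
have Hlb' : forall j, 1 <= j < k -> (m <= slack_j n k P j)%R.
  move=> j hj; apply: Hlb; apply/mapP; exists j => //; rewrite mem_iota; lia.
case/mapP: Hmem => j; rewrite mem_iota => /andP[j1 j2] Hmj.
case: j j1 j2 Hmj => [//|i] _ j2 Hmj.
suff: forall d i, k - i.+1 = d -> i.+1 < k -> slack_j n k P i.+1 = m ->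
  exists j : nat, [/\ 1 <= j < k, nth 0 P j.-1 < nth 0 P j & m = slack_j n k P j].
  by move=> /(_ _ i erefl); apply; [lia | by []].
clear Hmj j2.
elim=> [|d IH] {}i Hdd Hi Heq; first lia.
case: (ltnP (nth 0 P i) (nth 0 P i.+1)) => h.
  by exists i.+1; split => //; lia.
have C := @conc n k P i Hs Hn (Hi : i.+2 <= k) h.
have Gi : (m <= slack_j n k P i)%R.
  case: i {IH Hdd Heq C h} Hi => [|i] Hi; first by rewrite G0 ltW.
  by apply: Hlb'; lia.
have H2 : (slack_j n k P i.+2 <= m)%R by lia.
case: (ltnP i.+2 k) => Hk2; last first.
  have Ek : i.+2 = k by lia.
  by move: H2; rewrite Ek Gk => /(lt_le_trans Hneg); rewrite ltxx.
apply: (IH i.+1) => //; first lia.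
have := Hlb' i.+2 ltac:(lia); lia.
Qed.
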